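(* Let $\boldsymbol k$ be an algebraically closed field with $\operatorname{char}\boldsymbol k\neq 2$, let $V$ be a vector space over $\boldsymbol k$ of finite dimension $n$, and let $\mathcal C\subseteq V^*\otimes V^*\otimes V$ be the subspace of tensors fixed by the involution $\ell\otimes\ell'\otimes v\mapsto \ell'\otimes\ell\otimes v$. Then there is a nonempty (dense) open subset $U\subseteq\mathcal C$ such that for every $m\in U$ the $\boldsymbol k$-algebra $\{V,m\}$ is a simple commutative algebra with trivial automorphism group.
   Context: For $m=\sum\ell\otimes\ell'\otimes v\in V^*\otimes V^*\otimes V$, the $\boldsymbol k$-algebra $\{V,m\}$ is the (not necessarily associative) algebra structure on $V$ with product $ab:=\sum\ell(a)\ell'(b)v$. The algebra $\{V,m\}$ is commutative exactly when $m\in\mathcal C$. Simple means having no two-sided ideals other than $0$ and $V$ (the paper's proof shows nonexistence of two-sided ideals of dimension $d$ with $0<d<n$). The automorphism group of $\{V,m\}$ is the stabilizer of $m$ in $\mathrm{GL}(V)$ acting naturally on $V^*\otimes V^*\otimes V$. *)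

(* Defs.v *)
From HB Require Import structures.
From mathcomp Require Import all_boot all_order all_algebra.
Set Implicit Arguments. Unset Strict Implicit. Unset Printing Implicit Defensive.
Import Order.TTheory GRing.Theory.
Local Open Scope ring_scope.

(* V = 'rV[k]_n (coordinates w.r.t. a fixed basis e_0..e_{n-1}).
   A tensor m in V* (x) V* (x) V is given by its coordinates m (i,j,l)
   w.r.t. the basis e_i^* (x) e_j^* (x) e_l. *)
Definition tensor (k : Type) (n : nat) := {ffun 'I_n * 'I_n * 'I_n -> k}.

Definition tswap (k : Type) (n : nat) (m : tensor k n) : tensor k n :=
  [ffun t : 'I_n * 'I_n * 'I_n => m (t.1.2, t.1.1, t.2)].

Definition commC (k : eqType) (n : nat) : pred (tensor k n) :=
  fun m => tswap m == m.

(* the product of the algebra {V, m}: a b = sum l(a) l'(b) v *)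
Definition tmul (k : pzRingType) (n : nat) (m : tensor k n) (a b : 'rV[k]_n)
  : 'rV[k]_n :=
  \row_(l < n) \sum_(i < n) \sum_(j < n) a 0 i * b 0 j * m (i, j, l).

(* subspaces of V are row spaces of n x n matrices *)
Definition is_ideal (k : fieldType) (n : nat) (m : tensor k n) (I : 'M[k]_n) :=
  forall a u : 'rV[k]_n, (u <= I)%MS ->
    (tmul m a u <= I)%MS /\ (tmul m u a <= I)%MS.

Definition is_simple (k : fieldType) (n : nat) (m : tensor k n) :=
  forall I : 'M[k]_n, is_ideal m I -> (I == (0 : 'M[k]_n))%MS \/ (I == (1%:M : 'M[k]_n))%MS.

Definition is_commutative (k : pzRingType) (n : nat) (m : tensor k n) :=
  forall a b : 'rV[k]_n, tmul m a b = tmul m b a.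

Definition is_automorphism (k : fieldType) (n : nat) (m : tensor k n)
  (A : 'M[k]_n) :=
  A \in unitmx /\ forall a b : 'rV[k]_n, tmul m (a *m A) (b *m A) = tmul m a b *m A.

Definition trivial_aut (k : fieldType) (n : nat) (m : tensor k n) :=
  forall A : 'M[k]_n, is_automorphism m A -> A = 1%:M.

Inductive polyfun (k : pzRingType) (n : nat) : (tensor k n -> k) -> Prop :=
| polyfun_cst (c : k) : polyfun (fun _ => c)
| polyfun_coord (t : 'I_n * 'I_n * 'I_n) : polyfun (fun m => m t)
| polyfun_add f g : polyfun f -> polyfun g -> polyfun (fun m => f m + g m)
| polyfun_mul f g : polyfun f -> polyfun g -> polyfun (fun m => f m * g m).

(* Zariski-open subsets of C (subspace topology): complements in C of the
   common zero locus of a family S of polynomial functions *)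
Definition zariski_open_in_C (k : pzRingType) (n : nat) (U : pred (tensor k n)) :=
  exists S : (tensor k n -> k) -> Prop,
    (forall f, S f -> polyfun f) /\
    forall m, U m <-> (commC m /\ exists2 f, S f & f m != 0).

(* Main.v *)
Require Import Defs.
From HB Require Import structures.
From mathcomp Require Import all_boot all_order all_algebra.
From mathcomp Require Import ring zify.
From Stdlib Require Import FunctionalExtensionality.
Set Implicit Arguments. Unset Strict Implicit. Unset Printing Implicit Defensive.
Import Order.TTheory GRing.Theory.
Local Open Scope ring_scope.

Section PF.
Variables (k : pzRingType) (n : nat).
Notation T := (tensor k n).

Lemma pf_ext (f g : T -> k) : f =1 g -> polyfun f -> polyfun g.
Proof. by move=> /functional_extensionality ->. Qed.

Lemma pf_sum (I : Type) (r : seq I) (P : pred I) (F : I -> T -> k) :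
  (forall i, polyfun (F i)) -> polyfun (fun m => \sum_(i <- r | P i) F i m).
Proof.
move=> HF; elim: r => [|x r IH].
  by apply: (pf_ext _ (polyfun_cst _ 0)) => m; rewrite big_nil.
case Px: (P x).
  apply: (pf_ext _ (polyfun_add (HF x) IH)) => m; by rewrite big_cons Px.
by apply: (pf_ext _ IH) => m; rewrite big_cons Px.
Qed.

Lemma pf_prod (I : Type) (r : seq I) (P : pred I) (F : I -> T -> k) :
  (forall i, polyfun (F i)) -> polyfun (fun m => \prod_(i <- r | P i) F i m).
Proof.
move=> HF; elim: r => [|x r IH].
  by apply: (pf_ext _ (polyfun_cst _ 1)) => m; rewrite big_nil.
case Px: (P x).
  apply: (pf_ext _ (polyfun_mul (HF x) IH)) => m; by rewrite big_cons Px.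
by apply: (pf_ext _ IH) => m; rewrite big_cons Px.
Qed.

Definition mxpf p q (M : T -> 'M[k]_(p, q)) := forall i j, polyfun (fun m => M m i j).

Lemma mxpf_mul p q r (M : T -> 'M[k]_(p, q)) (N : T -> 'M[k]_(q, r)) :
  mxpf M -> mxpf N -> mxpf (fun m => M m *m N m).
Proof.
move=> HM HN i j.

have H := @pf_sum _ (index_enum 'I_q) xpredT (fun l m => M m i l * N m l j) (fun l => polyfun_mul (HM i l) (HN l j)).
by apply: (pf_ext _ H) => m; rewrite mxE.
Qed.

Lemma mxpf_cst p q (M : 'M[k]_(p, q)) : mxpf (fun _ => M).
Proof. by move=> i j; apply: polyfun_cst. Qed.

Lemma mxpf_tr p q (M : T -> 'M[k]_(p, q)) : mxpf M -> mxpf (fun m => (M m)^T).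
Proof. by move=> H i j; apply: (pf_ext _ (H j i)) => m; rewrite mxE. Qed.

Lemma mxpf_scale p q (c : T -> k) (M : T -> 'M[k]_(p, q)) :
  polyfun c -> mxpf M -> mxpf (fun m => c m *: M m).
Proof. by move=> Hc H i j; apply: (pf_ext _ (polyfun_mul Hc (H i j))) => m; rewrite mxE. Qed.

Lemma pf_det p (M : T -> 'M[k]_p) : mxpf M -> polyfun (fun m => \det (M m)).
Proof.
move=> H; apply: pf_sum => s; apply: polyfun_mul; first exact: polyfun_cst.
by apply: pf_prod => i; apply: H.
Qed.

Lemma mxpf_adj p (M : T -> 'M[k]_p) : mxpf M -> mxpf (fun m => \adj (M m)).
Proof.
move=> H i j; apply: (pf_ext (f := fun m => (-1) ^+ (j + i) * \det (row' j (col' i (M m))))).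
  by move=> m; rewrite mxE /cofactor.
apply: polyfun_mul; first exact: polyfun_cst.
by apply: pf_det => a b; apply: (pf_ext _ (H _ _)) => m; rewrite !mxE.
Qed.

Lemma mxpf_exp p (M : T -> 'M[k]_p.+1) e : mxpf M -> mxpf (fun m => M m ^+ e).
Proof.
move=> H; elim: e => [|e IH] i j.
  by apply: (pf_ext _ (mxpf_cst 1 i j)) => m; rewrite expr0.
by apply: (pf_ext _ (mxpf_mul H IH i j)) => m; rewrite exprS.
Qed.
End PF.


Section AL.
Variables (k : fieldType) (n : nat).
Notation T := (tensor k n).
Implicit Types (m : T).

Definition Lmat m (a : 'rV[k]_n) : 'M[k]_n := \matrix_(j, l) \sum_i a 0 i * m (i, j, l).
Definition tcol m : 'cV[k]_n := \col_i \sum_j m (i, j, j).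
Definition B1 m : 'M[k]_n := \matrix_(i, j) \sum_l m (i, j, l) * tcol m l 0.
Definition u0 m : 'rV[k]_n := (tcol m)^T *m \adj (B1 m).
Definition wv m e := iter e (fun w => tmul m (u0 m) w) (u0 m).
Definition Wm m : 'M[k]_n := \matrix_(e < n) wv m e.
Definition faut m := \det (B1 m) * \det (Wm m).

Lemma tmulE m a b : tmul m a b = b *m Lmat m a.
Proof.
apply/rowP => l; rewrite !mxE exchange_big; apply: eq_bigr => j _.
rewrite mxE mulr_sumr; apply: eq_bigr => i _; ring.
Qed.

Lemma deltaE p (M : 'M[k]_p) i j : ((delta_mx 0 i : 'rV[k]_p) *m M *m (delta_mx 0 j : 'rV[k]_p)^T) 0 0 = M i j.
Proof. by rewrite trmx_delta -rowE -colE !mxE. Qed.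

Lemma tr_Lmat m a : \tr (Lmat m a) = (a *m tcol m) 0 0.
Proof.
rewrite /mxtrace !mxE; under eq_bigr do rewrite mxE.
rewrite exchange_big; apply: eq_bigr => i _; rewrite mxE mulr_sumr //.
Qed.

Lemma B1E m a b : (a *m B1 m *m b^T) 0 0 = (tmul m a b *m tcol m) 0 0.
Proof.
rewrite !mxE.
transitivity (\sum_i \sum_j \sum_l a 0 i * b 0 j * m (i, j, l) * tcol m l 0).
  under eq_bigr do rewrite !mxE big_distrl /=.
  rewrite exchange_big /=; apply: eq_bigr => i _; apply: eq_bigr => j _.
  rewrite !mxE big_distrr big_distrl /=; apply: eq_bigr => l _; ring.
under [RHS]eq_bigr do rewrite !mxE big_distrl /=.
rewrite [RHS]exchange_big /=; apply: eq_bigr => i _.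
under [RHS]eq_bigr do rewrite big_distrl /=.
rewrite [RHS]exchange_big /=; apply: eq_bigr => j _; apply: eq_bigr => l _; by rewrite /tcol mxE.
Qed.

Section Aut.
Variables (m : T) (A : 'M[k]_n).
Hypothesis HA : is_automorphism m A.

Lemma Lmat_aut a : A *m Lmat m (a *m A) = Lmat m a *m A.
Proof.
case: HA => uA hA; apply/row_matrixP => i.
rewrite (row_mul i A) (row_mul i (Lmat m a)) rowE -tmulE hA tmulE -rowE; done.
Qed.

Lemma tau_inv (a : 'rV[k]_n) : (a *m A *m tcol m) 0 0 = (a *m tcol m) 0 0.
Proof.
case: (HA) => uA _; rewrite -!tr_Lmat.
have -> : Lmat m (a *m A) = invmx A *m (Lmat m a *m A) by rewrite -Lmat_aut mulKmx.
by rewrite mxtrace_mulC mulmxK.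
Qed.

Lemma tcol_inv : A *m tcol m = tcol m.
Proof.
apply/matrixP => i j; rewrite (ord1 j).
have E (M : 'cV[k]_n) : M i 0 = ((delta_mx 0 i : 'rV[k]_n) *m M) 0 0 by rewrite -rowE mxE.
by rewrite E mulmxA tau_inv -E.
Qed.

Lemma B1_inv : A *m B1 m *m A^T = B1 m.
Proof.
case: (HA) => uA hA.
apply/matrixP => i j; rewrite -deltaE -[RHS]deltaE.
rewrite !mulmxA -[_ *m A^T *m _]mulmxA -trmx_mul B1E.
by rewrite hA tau_inv B1E.
Qed.

Lemma u0_inv : \det (B1 m) != 0 -> u0 m *m A = u0 m.
Proof.
move=> hd; case: (HA) => uA _.
have uB : B1 m \in unitmx by rewrite unitmxE unitfE.
have uAt : A^T \in unitmx by rewrite unitmx_tr.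
have hu : u0 m *m B1 m = \det (B1 m) *: (tcol m)^T.
  by rewrite /u0 -mulmxA mul_adj_mx mul_mx_scalar.
apply: (can_inj (mulmxK uB)); apply: (can_inj (mulmxK uAt)).
rewrite -(mulmxA (u0 m *m A)) -(mulmxA (u0 m)) (mulmxA A) B1_inv hu.
by rewrite -scalemxAl -trmx_mul tcol_inv.
Qed.

Lemma wv_inv e : \det (B1 m) != 0 -> wv m e *m A = wv m e.
Proof.
move=> hd; case: (HA) => uA hA; elim: e => [|e IH] /=; first exact: u0_inv.
by rewrite -hA IH u0_inv.
Qed.
End Aut.

Lemma faut_triv m : faut m != 0 -> trivial_aut m.
Proof.
rewrite mulf_eq0 negb_or => /andP [hB hW] A HA.
have uW : Wm m \in unitmx by rewrite unitmxE unitfE.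
have WA : Wm m *m A = Wm m.
  by apply/row_matrixP => e; rewrite row_mul rowK wv_inv.
by rewrite -[A](mulKmx uW) WA mulVmx.
Qed.

Lemma ideal_mul m (I : 'M[k]_n) a (u : 'rV[k]_n) : is_ideal m I -> (u <= I)%MS -> (u *m Lmat m a <= I)%MS.
Proof. by move=> hI hu; rewrite -tmulE; case: (hI a u hu). Qed.

End AL.


Section SI.
Variables (k : fieldType) (n' : nat).
Notation N := n'.+1.
Notation T := (tensor k N).
Implicit Types (m : T).

Definition e0 : 'rV[k]_N := delta_mx 0 0.
Definition elast : 'rV[k]_N := delta_mx 0 ord_max.
Definition Xm m := Lmat m e0.
Definition Ym m := Lmat m elast.
Definition word m (ab : 'I_N * 'I_N) : 'M[k]_N :=
  Xm m ^+ (n' - ab.1) *m Ym m *m Xm m ^+ ab.2.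
Definition idx (p : 'I_(N * N)) : 'I_N * 'I_N := enum_val (cast_ord (esym (mxvec_cast N N)) p).
Definition Gm m : 'M[k]_(N * N) := \matrix_p mxvec (word m (idx p)).
Definition fsimp m := \det (Gm m).

Lemma idx_mxvec i j : idx (mxvec_index i j) = (i, j).
Proof. by rewrite /idx /mxvec_index cast_ordK enum_rankK. Qed.

Lemma ideal_pow m (I : 'M[k]_N) e (u : 'rV[k]_N) :
  is_ideal m I -> (u <= I)%MS -> (u *m Xm m ^+ e <= I)%MS.
Proof.
move=> hI; elim: e u => [|e IH] u hu; first by rewrite expr0 mulmx1.
by rewrite exprS mulmxA; apply: IH; apply: ideal_mul.
Qed.

Lemma ideal_word m (I : 'M[k]_N) ab (u : 'rV[k]_N) :
  is_ideal m I -> (u <= I)%MS -> (u *m word m ab <= I)%MS.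
Proof.
move=> hI hu; rewrite /word !mulmxA; apply: ideal_pow => //.
by apply: ideal_mul => //; apply: ideal_pow.
Qed.

Lemma mxvecZ (c : k) (A : 'M[k]_N) : mxvec (c *: A) = c *: mxvec A.
Proof. by apply/rowP; case/mxvec_indexP => a b; rewrite mxE !mxvecE mxE. Qed.

Lemma simple_of m : fsimp m != 0 -> is_simple m.
Proof.
move=> hG I hI; case: (eqVneq I 0) => [->|nz]; first by left; rewrite submx_refl.
right; rewrite submx1 /=.
have [i hi] : exists i, row i I != 0.
  apply/existsP; apply: contraNT nz => /existsPn H; apply/eqP/row_matrixP => i.
  by rewrite row0; apply/eqP/negbNE/H.
set u := row i I in hi; have uI : (u <= I)%MS by apply: row_sub.
have [j hj] : exists j, u 0 j != 0.
  apply/existsP; apply: contraNT hi => /existsPn H; apply/eqP/rowP => j.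
  by rewrite [RHS]mxE; apply/eqP/negbNE/H.
have uG : Gm m \in unitmx by rewrite unitmxE unitfE.
apply/row_subP => l; rewrite row1.
have /submxP [D hD] : (mxvec (delta_mx j l : 'M[k]_N) <= Gm m)%MS.
  by apply: submx_full; rewrite row_full_unit.
have hd : (delta_mx j l : 'M[k]_N) = \sum_p D 0 p *: word m (idx p).
  apply: (can_inj mxvecK); rewrite hD mulmx_sum_row raddf_sum; apply: eq_bigr => p _.
  by rewrite rowK /= mxvecZ.
have hu : u *m delta_mx j l = u 0 j *: delta_mx 0 l.
  apply/rowP => c; rewrite !mxE (bigD1 j) //= big1 => [|j' hj'].
    by rewrite !mxE eqxx /= addr0.
  by rewrite !mxE (negbTE hj') mulr0.
have : (u *m delta_mx j l <= I)%MS.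
  rewrite hd mulmx_sumr; apply: summx_sub => p _; rewrite -scalemxAr.
  by apply: scalemx_sub; apply: ideal_word.
rewrite hu => /(scalemx_sub (u 0 j)^-1); rewrite scalerA mulVf // scale1r //.
Qed.

End SI.


Section PFC.
Variables (k : fieldType) (n : nat).
Notation T := (tensor k n).

Lemma mxpf_Lmat (a : T -> 'rV[k]_n) : mxpf a -> mxpf (fun m => Lmat m (a m)).
Proof.
move=> H j l.
have := @pf_sum _ _ _ (index_enum 'I_n) xpredT (fun i m => a m 0 i * m (i, j, l))
  (fun i => polyfun_mul (H 0 i) (polyfun_coord _ _)).
by apply: pf_ext => m; rewrite mxE.
Qed.

Lemma mxpf_tcol : mxpf (@tcol k n).
Proof.
move=> i j.
have := @pf_sum _ _ _ (index_enum 'I_n) xpredT (fun l (m : T) => m (i, l, l))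
  (fun l => polyfun_coord _ _).
by apply: pf_ext => m; rewrite mxE.
Qed.

Lemma mxpf_B1 : mxpf (@B1 k n).
Proof.
move=> i j.
have := @pf_sum _ _ _ (index_enum 'I_n) xpredT (fun l (m : T) => m (i, j, l) * tcol m l 0)
  (fun l => polyfun_mul (polyfun_coord _ _) (mxpf_tcol l 0)).
by apply: pf_ext => m; rewrite mxE.
Qed.

Lemma mxpf_u0 : mxpf (@u0 k n).
Proof. exact: mxpf_mul (mxpf_tr mxpf_tcol) (mxpf_adj mxpf_B1). Qed.

Lemma mxpf_wv e : mxpf (fun m : T => wv m e).
Proof.
elim: e => [|e IH] /=; first exact: mxpf_u0.
move=> i j; have := mxpf_mul IH (mxpf_Lmat mxpf_u0) i j.
by apply: pf_ext => m; rewrite tmulE.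
Qed.

Lemma pf_faut : polyfun (@faut k n).
Proof.
apply: polyfun_mul; first exact: pf_det mxpf_B1.
apply: pf_det => e l; have := mxpf_wv e 0 l.
by apply: pf_ext => m; rewrite mxE.
Qed.

Definition line (m0 m1 : T) (t : k) : T := [ffun x => m0 x + t * (m1 x - m0 x)].

Lemma pf_line (m0 m1 : T) f : polyfun f -> exists P : {poly k}, forall t, f (line m0 m1 t) = P.[t].
Proof.
elim => [c|x|f1 g1 _ [P hP] _ [Q hQ]|f1 g1 _ [P hP] _ [Q hQ]].
- by exists c%:P => t; rewrite hornerC.
- exists ((m0 x)%:P + 'X * (m1 x - m0 x)%:P) => t.
  by rewrite ffunE hornerD hornerC hornerM hornerX hornerC.
- by exists (P + Q) => t; rewrite hP hQ hornerD.
- by exists (P * Q) => t; rewrite hP hQ hornerM.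
Qed.

Lemma commC_line (m0 m1 : T) t : commC m0 -> commC m1 -> commC (line m0 m1 t).
Proof.
move=> /eqP h0 /eqP h1; apply/eqP/ffunP => x.
have e0 := congr1 (fun f : T => f x) h0; have e1 := congr1 (fun f : T => f x) h1.
by rewrite /= !ffunE in e0 e1 *; rewrite e0 e1.
Qed.

Lemma line0 (m0 m1 : T) : line m0 m1 0 = m0.
Proof. by apply/ffunP => x; rewrite ffunE mul0r addr0. Qed.
Lemma line1 (m0 m1 : T) : line m0 m1 1 = m1.
Proof. by apply/ffunP => x; rewrite ffunE mul1r addrC subrK. Qed.

Lemma comm_of (m : T) : commC m -> is_commutative m.
Proof.
move=> /eqP h a b; apply/rowP => l; rewrite !mxE exchange_big /=.
apply: eq_bigr => i _; apply: eq_bigr => j _.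
have e := congr1 (fun f : T => f (j, i, l)) h; rewrite /= ffunE /= in e.
by rewrite e; ring.
Qed.
End PFC.

Section PFS.
Variables (k : fieldType) (n' : nat).
Lemma pf_fsimp : polyfun (@fsimp k n').
Proof.
apply: pf_det => p q.
have hw : mxpf (fun m : tensor k n'.+1 => word m (idx p)).
  rewrite /word /Xm /Ym.
  apply: mxpf_mul; first apply: mxpf_mul; try apply: mxpf_exp; apply: mxpf_Lmat; apply: mxpf_cst.
case/mxvec_indexP: q => a b; have := hw a b.
by apply: pf_ext => m; rewrite [RHS]mxE mxvecE.
Qed.
End PFS.

Lemma exists_nonroot (k : closedFieldType) (P : {poly k}) : P != 0 -> exists t, P.[t] != 0.
Proof.
move=> hP; have hs : size (1 + P * 'X) != 1%N.
  rewrite addrC size_addl size_mulX // ?size_poly1 ?eqSS ?ltnS ?lt0n ?size_poly_eq0 //.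
have [x /rootP] := closed_rootP _ hs.
rewrite hornerD hornerC hornerM hornerX => h; exists x.
apply/eqP => h0; move: h; rewrite h0 mul0r addr0 => /eqP; rewrite oner_eq0. done.
Qed.


Section EX.
Variables (k : fieldType) (n' : nat).
Notation N := n'.+1.
Notation T := (tensor k N).

Lemma sum_ind (F : 'I_N -> k) (c : nat) :
  \sum_(l < N) ((l : nat) == c)%:R * F l = if (c < N)%N then F (inord c) else 0.
Proof.
case: ltnP => hc.
  rewrite (bigD1 (inord c)) //= inordK // eqxx mul1r big1 ?addr0 // => l hl.
  suff /negbTE -> : (l : nat) != c by rewrite mul0r.
  by apply: contra hl => /eqP <-; rewrite inord_val.
apply: big1 => l _; suff /negbTE -> : (l : nat) != c by rewrite mul0r.
by apply: contraTneq hc => <-; rewrite -ltnNge.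
Qed.

Lemma Lmat_delta (m : T) c j l : Lmat m (delta_mx 0 c) j l = m (c, j, l).
Proof.
rewrite mxE (bigD1 c) //= big1 ?addr0 => [|i hi]; first by rewrite mxE !eqxx mul1r.
by rewrite mxE (negbTE hi) andbF mul0r.
Qed.

(* example for simplicity *)
Definition ms_b (i j l : nat) : bool :=
  if (i == n') && (j == n') then l == 0%N
  else if i == 0%N then l == j.+1
  else if j == 0%N then l == i.+1 else false.
Definition ms : T := [ffun x : 'I_N * 'I_N * 'I_N => (ms_b x.1.1 x.1.2 x.2)%:R].

Lemma ms_b_sym i j l : ms_b i j l = ms_b j i l.
Proof.
rewrite /ms_b andbC; case: ((j == n') && (i == n')) => //.
by case: i => [|i]; case: j => [|j].
Qed.

Lemma commC_ms : commC ms.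
Proof. by apply/eqP/ffunP => [[[i j] l]]; rewrite !ffunE /= ms_b_sym. Qed.

Lemma Xms_pow e : (e <= n')%N ->
  Xm ms ^+ e = \matrix_(i < N, j < N) (((j : nat) == (i + e)%N)%:R : k).
Proof.
elim: e => [_|e IH he].
  by apply/matrixP => i j; rewrite expr0 !mxE addn0 eq_sym.
rewrite exprSr IH ?(ltnW he) //; apply/matrixP => i j; rewrite !mxE.
under eq_bigr do rewrite mxE /Xm /e0 Lmat_delta ffunE /=.
rewrite (sum_ind (fun l : 'I_N => ((ms_b 0 l j)%:R : k))).
case: ltnP => h; last first.
  have hj := ltn_ord j; rewrite ltn_eqF //; lia.
rewrite /ms_b inordK //; have -> : (0 == n') = false by case: n' he.
by rewrite /= addnS.
Qed.

Lemma Yms i j : Ym ms i j = (((nat_of_ord i) == n') && ((nat_of_ord j) == 0%N))%:R.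
Proof.
rewrite /Ym /elast Lmat_delta ffunE /= /ms_b eqxx /=.
have hi := ltn_ord i; have hj := ltn_ord j.
case: (nat_of_ord i =P n') => //= h1.
case: (n' =P 0%N) => [h0|h0]; first lia.
case: (nat_of_ord i =P 0%N) => //= _.
by rewrite ltn_eqF.
Qed.

Lemma XYms (a : 'I_N) i l : (Xm ms ^+ (n' - a) *m Ym ms) i l =
  ((nat_of_ord i == nat_of_ord a) && ((nat_of_ord l) == 0%N))%:R.
Proof.
rewrite Xms_pow ?leq_subr // mxE.
under eq_bigr do rewrite mxE.
rewrite (sum_ind (fun p : 'I_N => Ym ms p l)).
have ha := ltn_ord a; have hi := ltn_ord i.
case: ltnP => h.
  rewrite Yms inordK //; congr ((_ && _)%:R); apply/eqP/eqP; lia.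
case: (nat_of_ord i =P nat_of_ord a) => [e|//]; lia.
Qed.

Lemma word_ms ab : word ms ab = delta_mx ab.1 ab.2.
Proof.
case: ab => a b; apply/matrixP => i j; rewrite /word /=.
rewrite (Xms_pow (e := b)); last by rewrite -ltnS.
rewrite mxE.
transitivity (\sum_(l < N) ((nat_of_ord l) == 0%N)%:R *
    (((nat_of_ord i == nat_of_ord a) && (nat_of_ord j == nat_of_ord b))%:R : k)).
  apply: eq_bigr => l _; rewrite XYms mxE.
  case: (nat_of_ord l =P 0%N) => [->|hl]; last by rewrite andbF !mul0r.
  by rewrite andbT add0n mul1r -natrM mulnb.
rewrite (sum_ind (fun _ => _)) /= mxE.
by case: (i =P a) => [->|hi]; case: (j =P b) => [->|hj]; rewrite ?eqxx //=;
  (try by case: eqP => // /val_inj);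
  (try by rewrite andbF).
Qed.

Lemma Gm_ms : Gm ms = 1%:M.
Proof.
apply/row_matrixP => p; rewrite rowK row1.
by case/mxvec_indexP: p => a b; rewrite idx_mxvec word_ms mxvec_delta.
Qed.

Lemma fsimp_ms : fsimp ms != 0.
Proof. by rewrite /fsimp Gm_ms det1 oner_eq0. Qed.
End EX.


Section EXA.
Variables (k : fieldType) (n' : nat).
Notation N := n'.+1.
Notation T := (tensor k N).

Definition ma_rule (j l : nat) : bool := ((j == 0%N) && (l == 0%N)) || (l == j.+1).
Definition ma_b (i j l : nat) : bool :=
  if i == 0%N then ma_rule j l else if j == 0%N then ma_rule i l
  else (l == 0%N) && (i + j == N)%N.
Definition ma : T := [ffun x : 'I_N * 'I_N * 'I_N => (ma_b x.1.1 x.1.2 x.2)%:R].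

Lemma commC_ma : commC ma.
Proof.
apply/eqP/ffunP => [[[i j] l]]; rewrite !ffunE /= /ma_b.
by case: i => [[|i] hi]; case: j => [[|j] hj] //=; rewrite addnC.
Qed.

Lemma ma_rule_eq j l : ma_rule j l = (j == l.-1).
Proof. by rewrite /ma_rule; case: l => [|l]; case: j => [|j] //=; rewrite eq_sym. Qed.

Lemma ma_diag l j : ma_b l j j = (l == 0%N) && (j == 0%N).
Proof. by rewrite /ma_b; case: l => [|l]; case: j => [|j] //=; rewrite ma_rule_eq /= gtn_eqF. Qed.

Definition sg (i : nat) : nat := if i == 0%N then 0%N else (N - i)%N.

Lemma ma_b0 (i j : nat) : (i < N)%N -> (j < N)%N -> ma_b i j 0 = (j == sg i).
Proof.
move=> hi hj.
rewrite /ma_b /sg; case: (i =P 0%N) => [_|h1] /=; first by rewrite ma_rule_eq.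
case: (j =P 0%N) => [h2|h2] /=.
  by rewrite ma_rule_eq /=; apply/eqP/eqP; lia.
by apply/eqP/eqP; lia.
Qed.

Lemma tcol_ma : tcol ma = \col_(l < N) ((nat_of_ord l == 0%N)%:R : k).
Proof.
apply/matrixP => l z; rewrite !mxE.
transitivity (\sum_(j < N) ((nat_of_ord j) == 0%N)%:R * ((nat_of_ord l == 0%N)%:R : k)).
  by apply: eq_bigr => j _; rewrite ffunE /= ma_diag -natrM mulnb andbC.
by rewrite (sum_ind (fun _ => _)) /=.
Qed.

Lemma B1_ma : B1 ma = \matrix_(i < N, j < N) ((nat_of_ord j == sg i)%:R : k).
Proof.
apply/matrixP => i j; rewrite !mxE.
under eq_bigr do rewrite tcol_ma mxE mulrC.
by rewrite (sum_ind (fun l : 'I_N => ma (i, j, l))) /= ffunE /= inordK // (@ma_b0 i j (ltn_ord i) (ltn_ord j)).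
Qed.

Lemma sg_lt (i : 'I_N) : (sg i < N)%N.
Proof. have := ltn_ord i; rewrite /sg; case: eqP => //; lia. Qed.

Lemma sgK (i : 'I_N) : sg (sg i) = i.
Proof. have := ltn_ord i; rewrite /sg; case: (nat_of_ord i =P 0%N) => [->|h] //= hi; case: eqP; lia. Qed.

Lemma B1_ma2 : B1 ma *m B1 ma = 1%:M.
Proof.
rewrite B1_ma; apply/matrixP => i j; rewrite !mxE.
under eq_bigr do rewrite !mxE.
rewrite (sum_ind (fun l : 'I_N => ((nat_of_ord j == sg l)%:R : k))) sg_lt inordK ?sg_lt // sgK.
by case: (i =P j) => [->|h]; rewrite ?eqxx //; case: eqP => // /val_inj e; rewrite e in h.
Qed.

Lemma detB1_ma : \det (B1 ma) != 0.
Proof.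
have := congr1 determinant B1_ma2; rewrite det_mulmx det1 => h.
by apply/eqP => h0; move: h; rewrite h0 mul0r => /eqP; rewrite eq_sym oner_eq0.
Qed.

Definition rr (e : nat) : 'rV[k]_N := \row_(l < N) ((nat_of_ord l <= e)%N)%:R.

Lemma LmatZ (m : T) c a : Lmat m (c *: a) = c *: Lmat m a.
Proof.
apply/matrixP => j l; rewrite !mxE mulr_sumr; apply: eq_bigr => i _; rewrite mxE; ring.
Qed.

Lemma u0_ma : u0 ma = \det (B1 ma) *: rr 0.
Proof.
have hadj : \adj (B1 ma) = \det (B1 ma) *: B1 ma.
  by rewrite -[\adj _]mulmx1 -B1_ma2 mulmxA mul_adj_mx mul_scalar_mx.
rewrite /u0 hadj -scalemxAr; congr (_ *: _).
apply/rowP => j; rewrite !mxE.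
under eq_bigr do rewrite tcol_ma B1_ma !mxE.
rewrite (sum_ind (fun l : 'I_N => ((nat_of_ord j == sg l)%:R : k))) /= inordK //.
by rewrite /sg /= leqn0.
Qed.

Lemma Lmat_r0 : Lmat ma (rr 0) = \matrix_(j < N, l < N) ((nat_of_ord j == (nat_of_ord l).-1)%:R : k).
Proof.
apply/matrixP => j l; rewrite !mxE.
under eq_bigr do rewrite mxE leqn0.
rewrite (sum_ind (fun i : 'I_N => ma (i, j, l))) /= ffunE /= inordK //.
by rewrite /ma_b /= ma_rule_eq.
Qed.

Lemma rr_step e : rr e *m Lmat ma (rr 0) = rr e.+1.
Proof.
rewrite Lmat_r0; apply/rowP => l; rewrite !mxE.
under eq_bigr do rewrite !mxE mulrC.
have hl := ltn_ord l.
rewrite (sum_ind (fun j : 'I_N => ((nat_of_ord j <= e)%N%:R : k))).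
case: ltnP => h; last lia.
rewrite inordK //; congr (GRing.natmul _ (nat_of_bool _)); apply/idP/idP; lia.
Qed.

Lemma wv_ma e : wv ma e = \det (B1 ma) ^+ e.+1 *: rr e.
Proof.
elim: e => [|e IH] /=; first by rewrite u0_ma expr1.
rewrite -/(wv ma e) IH tmulE u0_ma LmatZ -scalemxAl -scalemxAr rr_step scalerA exprS.
by congr (_ *: _); rewrite !exprS; ring.
Qed.

Lemma faut_ma : faut ma != 0.
Proof.
rewrite /faut mulf_neq0 ?detB1_ma //.
rewrite det_trig; last first.
  apply/is_trig_mxP => i j hij; rewrite mxE wv_ma !mxE.
  by rewrite leqNgt hij mulr0.
apply/prodf_neq0 => i _; rewrite mxE wv_ma !mxE leqnn mulr1.
by rewrite expf_neq0 // detB1_ma.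
Qed.
End EXA.


Unset Implicit Arguments.
Theorem theorem3 (k : closedFieldType) (n : nat) :
  (2 \notin [pchar k])%N ->
  exists U : pred (tensor k n),
    [/\ zariski_open_in_C U, (exists m, U m) &
        forall m, U m -> [/\ is_simple m, is_commutative m & trivial_aut m]].
Proof.
move=> _; case: n => [|n'].
  exists (fun m => commC m); split.
  - exists (fun f => f = (fun _ => 1)); split; first by move=> f ->; apply: polyfun_cst.
    move=> m; split; last by case.
    by move=> h; split=> //; exists (fun _ => 1) => //; exact: oner_neq0.
  - by exists [ffun _ => 0]; apply/eqP/ffunP => [[[i j] l]]; case: i.
  - move=> m _; split.
    + by move=> I _; left; rewrite [I]flatmx0 submx_refl.
    + by move=> a b; apply/rowP => [[]].
    + by move=> A _; rewrite [A]flatmx0 [1%:M]flatmx0.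
pose f := fun m : tensor k n'.+1 => fsimp m * faut m.
have pf : polyfun f := polyfun_mul (@pf_fsimp k n') (@pf_faut k n'.+1).
exists (fun m => commC m && (f m != 0)); split.
- exists (fun g => g = f); split; first by move=> g ->.
  move=> m; split => [/andP [h1 h2]|[h1 [g -> h2]]]; last by rewrite h1 h2.
  by split=> //; exists f.
- have [P hP] := pf_line (@ms k n') (@ma k n') (@pf_fsimp k n').
  have [Q hQ] := pf_line (@ms k n') (@ma k n') (@pf_faut k n'.+1).
  have hP0 : P != 0.
    apply: contraNneq (@fsimp_ms k n') => P0.
    by rewrite -{1}(line0 (@ms k n') (@ma k n')) hP P0 horner0.
  have hQ0 : Q != 0.
    apply: contraNneq (@faut_ma k n') => Q0.
    by rewrite -{1}(line1 (@ms k n') (@ma k n')) hQ Q0 horner0.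
  have [t ht] := exists_nonroot (mulf_neq0 hP0 hQ0).
  exists (line (@ms k n') (@ma k n') t).
  by rewrite commC_line ?commC_ms ?commC_ma //= /f hP hQ -hornerM.
- move=> m /andP [hc]; rewrite /f mulf_eq0 negb_or => /andP [h1 h2]; split.
  + exact: simple_of.
  + exact: comm_of.
  + exact: faut_triv.
Qed.
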